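(* Let $\Delta$ be a finite simplicial graph with $n$ vertices, and let $\Phi_\Delta\le\mathrm{GL}(n,\mathbb{Z})$ be the image of $\mathrm{Aut}(A_\Delta)$ under the homomorphism induced by abelianising $A_\Delta$ (coordinates indexed by the vertices of $\Delta$). A diagonal matrix $E\in\mathrm{GL}(n,\mathbb{Z})$, with diagonal entry $E(v)\in\{\pm1\}$ at vertex $v$, centralises $\Phi_\Delta$ if and only if both of the following hold: (1) if the domination classes $[v]$ and $[w]$ lie in the same $\mathrm{Aut}(\Delta)$-orbit of domination classes, then $E(v)=E(w)$; and (2) if $v$ is dominated by $w$, then $E(v)=E(w)$.
   Context: For a finite simplicial graph $\Delta=(V,E)$, $A_\Delta=\langle v\in V\mid [v,w]=1 \text{ for }(v,w)\in E\rangle$. For a vertex $v$, $\mathrm{lk}(v)$ is the set of neighbours of $v$ and $\mathrm{st}(v)=\mathrm{lk}(v)\cup\{v\}$. A vertex $y$ is dominated by $x$ (written $y\le x$) if $\mathrm{lk}(y)\subseteq\mathrm{st}(x)$. Vertices $v,w$ are domination equivalent if $v\le w$ and $w\le v$; $[v]$ is the domination class of $v$. $\mathrm{Aut}(\Delta)$ acts on the set of domination classes. *)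

(* Defs.v *)
From mathcomp Require Import all_boot all_order all_algebra all_fingroup.
Set Implicit Arguments. Unset Strict Implicit. Unset Printing Implicit Defensive.
Import GRing.Theory Num.Theory.
Local Open Scope ring_scope.

Definition simplicial_graph (n : nat) (e : rel 'I_n) : Prop :=
  symmetric e /\ irreflexive e.

(* Letters of words in the generators of A_Delta: (v, false) = v,
   (v, true) = v^-1. *)
Definition letter (n : nat) := ('I_n * bool)%type.

Definition winv (n : nat) (w : seq (letter n)) : seq (letter n) :=
  rev (map (fun l : letter n => (l.1, ~~ l.2)) w).

Inductive raag_eq (n : nat) (e : rel 'I_n) : seq (letter n) -> seq (letter n) -> Prop :=
| raag_refl w : raag_eq e w w
| raag_sym w1 w2 : raag_eq e w1 w2 -> raag_eq e w2 w1
| raag_trans w1 w2 w3 : raag_eq e w1 w2 -> raag_eq e w2 w3 -> raag_eq e w1 w3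
| raag_cat a b c d : raag_eq e a b -> raag_eq e c d -> raag_eq e (a ++ c) (b ++ d)
| raag_cancel x b : raag_eq e [:: (x, b); (x, ~~ b)] [::]
| raag_comm x y : e x y -> raag_eq e [:: (x, false); (y, false)] [:: (y, false); (x, false)].

Definition wsubst (n : nat) (phi : 'I_n -> seq (letter n)) (w : seq (letter n)) :
  seq (letter n) :=
  flatten (map (fun l : letter n => if l.2 then winv (phi l.1) else phi l.1) w).

(* phi : generators -> A_Delta (given by representative words) defines an
   endomorphism of A_Delta iff it respects the defining relators. *)
Definition raag_endo (n : nat) (e : rel 'I_n) (phi : 'I_n -> seq (letter n)) : Prop :=
  forall x y, e x y -> raag_eq e (phi x ++ phi y) (phi y ++ phi x).

Definition raag_aut (n : nat) (e : rel 'I_n) (phi : 'I_n -> seq (letter n)) : Prop :=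
  raag_endo e phi /\
  exists psi : 'I_n -> seq (letter n),
    raag_endo e psi /\
    (forall x, raag_eq e (wsubst phi (psi x)) [:: (x, false)]) /\
    (forall x, raag_eq e (wsubst psi (phi x)) [:: (x, false)]).

Definition expsum (n : nat) (u : 'I_n) (w : seq (letter n)) : int :=
  \sum_(l <- w | l.1 == u) (if l.2 then (-1) else 1).

(* Image of phi under abelianisation, in GL(n, Z): column v holds the
   coordinates of the image of v in Z^n. *)
Definition abmx (n : nat) (phi : 'I_n -> seq (letter n)) : 'M[int]_n :=
  \matrix_(u, v) expsum u (phi v).

Definition in_Phi (n : nat) (e : rel 'I_n) (M : 'M[int]_n) : Prop :=
  exists phi, raag_aut e phi /\ M = abmx phi.

(* Domination: y <= x iff lk(y) is contained in st(x). *)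
Definition dominated (n : nat) (e : rel 'I_n) (y x : 'I_n) : bool :=
  [forall z, e y z ==> (z == x) || e x z].

Definition dom_equiv (n : nat) (e : rel 'I_n) (v w : 'I_n) : bool :=
  dominated e v w && dominated e w v.

Definition dom_class (n : nat) (e : rel 'I_n) (v : 'I_n) : {set 'I_n} :=
  [set u | dom_equiv e u v].

Definition graph_aut (n : nat) (e : rel 'I_n) (s : {perm 'I_n}) : Prop :=
  forall x y, e (s x) (s y) = e x y.

Definition same_dom_orbit (n : nat) (e : rel 'I_n) (v w : 'I_n) : Prop :=
  exists s : {perm 'I_n}, graph_aut e s /\ (s @: dom_class e v) = dom_class e w.

(* Main.v *)
Require Import Defs.
From mathcomp Require Import all_boot all_order all_algebra all_fingroup.
From mathcomp Require Import ring.
Set Implicit Arguments. Unset Strict Implicit. Unset Printing Implicit Defensive.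
Import GRing.Theory Num.Theory.
Local Open Scope ring_scope.


Section Raag.
Variable n : nat.
Variable e : rel 'I_n.
Hypothesis esym : symmetric e.
Hypothesis eirr : irreflexive e.

Definition sgnl (l : letter n) : int := if l.2 then -1 else 1.

Lemma expsum_nil (u : 'I_n) : expsum u [::] = 0.
Proof. by rewrite /expsum big_nil. Qed.

Lemma expsum_cons (u : 'I_n) (l : letter n) w :
  expsum u (l :: w) = (if l.1 == u then sgnl l else 0) + expsum u w.
Proof. by rewrite /expsum big_cons; case: ifP => _; rewrite ?add0r. Qed.

Lemma expsum_cat (u : 'I_n) (w1 w2 : seq (letter n)) : expsum u (w1 ++ w2) = expsum u w1 + expsum u w2.
Proof. by rewrite /expsum big_cat. Qed.

Lemma expsum_winv (u : 'I_n) (w : seq (letter n)) : expsum u (winv w) = - expsum u w.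
Proof.
elim: w => [|l w IH]; first by rewrite /winv /= expsum_nil oppr0.
rewrite /winv /= rev_cons -cats1 expsum_cat -/(winv w) IH expsum_cons.
rewrite expsum_cons expsum_nil addr0 opprD addrC; congr (_ + _).
by case: ifP => // _; rewrite /sgnl /=; case: (l.2); rewrite ?opprK.
Qed.

Lemma raag_eq_expsum (u : 'I_n) (w1 w2 : seq (letter n)) : raag_eq e w1 w2 -> expsum u w1 = expsum u w2.
Proof.
elim=> //.
- by move=> ? ? ? _ -> _ ->.
- by move=> a b c d _ H1 _ H2; rewrite !expsum_cat H1 H2.
- move=> x b; rewrite !expsum_cons !expsum_nil /sgnl /=.
  by case: ifP => // _; case: b.
- move=> x y _; rewrite !expsum_cons !expsum_nil /sgnl /= !addr0 addrC //.
Qed.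

Fixpoint cinv (i j : 'I_n) (w : seq (letter n)) : int :=
  match w with
  | [::] => 0
  | l :: w' => cinv i j w' + (if l.1 == i then sgnl l else 0) * expsum j w'
  end.

Lemma cinv_cat (i j : 'I_n) (w1 w2 : seq (letter n)) :
  cinv i j (w1 ++ w2) = cinv i j w1 + cinv i j w2 + expsum i w1 * expsum j w2.
Proof.
elim: w1 => [|l w1 IH] /=; first by rewrite expsum_nil mul0r add0r addr0.
rewrite IH expsum_cat expsum_cons; ring.
Qed.

Lemma raag_eq_cinv (i j : 'I_n) (w1 w2 : seq (letter n)) : i != j -> ~~ e i j ->
  raag_eq e w1 w2 -> cinv i j w1 = cinv i j w2.
Proof.
move=> nij neij; elim=> //.
- by move=> ? ? ? _ -> _ ->.
- move=> a b c d Hab H1 Hcd H2; rewrite !cinv_cat H1 H2.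
  by rewrite (raag_eq_expsum _ Hab) (raag_eq_expsum _ Hcd).
- move=> x b /=; rewrite !expsum_cons !expsum_nil /= addr0 !mulr0 !add0r.
  case: eqP => [->|_]; last by rewrite mul0r.
  by rewrite (negbTE (nij)) mulr0.
- move=> x y exy /=; rewrite !expsum_cons !expsum_nil /= !addr0 !mulr0 !add0r.
  have A : (x == i) && (y == j) = false.
    by apply/negbTE/negP => /andP[/eqP ? /eqP ?]; subst; rewrite exy in neij.
  have B : (y == i) && (x == j) = false.
    by apply/negbTE/negP => /andP[/eqP ? /eqP ?]; subst; rewrite esym exy in neij.
  by move: A B; case: (x == i); case: (y == j); case: (y == i); case: (x == j);
    rewrite //= ?mulr0 ?mul0r.
Qed.

Lemma abmx_valid (phi : 'I_n -> seq (letter n)) : raag_endo e phi ->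
  forall v w i j, e v w -> i != j -> ~~ e i j ->
  abmx phi i v * abmx phi j w = abmx phi j v * abmx phi i w.
Proof.
move=> Hphi v w i j evw nij neij.
have := raag_eq_cinv nij neij (Hphi _ _ evw).
rewrite !cinv_cat !mxE => H.
have : expsum i (phi v) * expsum j (phi w) = expsum i (phi w) * expsum j (phi v).
  by move: H; rewrite [cinv i j (phi w) + _]addrC => /addrI.
by move=> ->; rewrite mulrC.
Qed.

Lemma expsum_wsubst (phi : 'I_n -> seq (letter n)) (u : 'I_n) (w : seq (letter n)) :
  expsum u (wsubst phi w) = \sum_x expsum u (phi x) * expsum x w.
Proof.
elim: w => [|l w IH].
  by rewrite /wsubst /= expsum_nil big1 // => x _; rewrite expsum_nil mulr0.
rewrite /wsubst /= expsum_cat -/(wsubst phi w) IH.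
under [X in _ = X]eq_bigr do rewrite expsum_cons mulrDr.
rewrite big_split /=; congr (_ + _).
rewrite (bigD1 l.1) //= eqxx big1 ?addr0; last first.
  by move=> x /negbTE nx; rewrite eq_sym nx mulr0.
by rewrite /sgnl; case: (l.2); rewrite ?expsum_winv ?mulrN1 ?mulr1.
Qed.

Lemma abmx_mul (phi psi : 'I_n -> seq (letter n)) : (forall x, raag_eq e (wsubst phi (psi x)) [:: (x, false)]) ->
  abmx phi *m abmx psi = 1%:M.
Proof.
move=> H; apply/matrixP=> u x; rewrite !mxE.
under eq_bigr do rewrite !mxE.
rewrite -expsum_wsubst (raag_eq_expsum u (H x)) expsum_cons expsum_nil addr0 /sgnl /=.
by rewrite eq_sym; case: eqP.
Qed.

End Raag.


Section Words.
Variable n : nat.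
Variable e : rel 'I_n.
Hypothesis esym : symmetric e.
Hypothesis eirr : irreflexive e.

Lemma req_ctx (u v w1 w2 : seq (letter n)) : raag_eq e w1 w2 ->
  raag_eq e (u ++ w1 ++ v) (u ++ w2 ++ v).
Proof. by move=> H; apply: raag_cat; [apply: raag_refl | apply: raag_cat => //; apply: raag_refl]. Qed.

Lemma req_tr (w1 w2 w3 : seq (letter n)) : raag_eq e w1 w2 -> raag_eq e w2 w3 -> raag_eq e w1 w3.
Proof. exact: raag_trans. Qed.

Lemma comm_ft (a b : 'I_n) : e a b ->
  raag_eq e [:: (a,false); (b,true)] [:: (b,true); (a,false)].
Proof.
move=> eab.
apply: (@req_tr _ [:: (b,true); (b,false); (a,false); (b,true)]).
  apply: raag_sym; exact: (req_ctx [::] [:: (a,false); (b,true)] (raag_cancel e b true)).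
apply: (@req_tr _ [:: (b,true); (a,false); (b,false); (b,true)]).
  have := req_ctx [:: (b,true)] [:: (b,true)] (raag_comm (e:=e) (x:=b) (y:=a) _).
  by rewrite esym; apply.
exact: (req_ctx [:: (b,true); (a,false)] [::] (raag_cancel e b false)).
Qed.

Lemma comm_tt (a b : 'I_n) : e a b ->
  raag_eq e [:: (a,true); (b,true)] [:: (b,true); (a,true)].
Proof.
move=> eab.
apply: (@req_tr _ [:: (b,true); (b,false); (a,true); (b,true)]).
  apply: raag_sym; exact: (req_ctx [::] [:: (a,true); (b,true)] (raag_cancel e b true)).
apply: (@req_tr _ [:: (b,true); (a,true); (b,false); (b,true)]).
  apply: (req_ctx [:: (b,true)] [:: (b,true)] (w1 := [:: (b,false); (a,true)])
    (w2 := [:: (a,true); (b,false)])); apply: comm_ft.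
  by rewrite esym.
exact: (req_ctx [:: (b,true); (a,true)] [::] (raag_cancel e b false)).
Qed.

Lemma comm_letters (l1 l2 : letter n) : l1.1 = l2.1 \/ e l1.1 l2.1 ->
  raag_eq e [:: l1; l2] [:: l2; l1].
Proof.
case: l1 => a s; case: l2 => b t /= [<-|eab].
  case: (eqVneq s t) => [->|nst]; first exact: raag_refl.
  have -> : t = ~~ s by move: nst; case: s; case: t.
  apply: (@req_tr _ [::]); first exact: raag_cancel.
  by apply: raag_sym; have := raag_cancel e a (~~ s); rewrite negbK.
case: s; case: t.
- exact: comm_tt.
- by apply: raag_sym; apply: comm_ft; rewrite esym.
- exact: comm_ft.
- exact: raag_comm.
Qed.

Lemma comm_letter_word (l : letter n) (u : seq (letter n)) :
  (forall l2, l2 \in u -> l.1 = l2.1 \/ e l.1 l2.1) ->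
  raag_eq e (l :: u) (u ++ [:: l]).
Proof.
elim: u => [|l2 u IH] H /=; first exact: raag_refl.
apply: (@req_tr _ (l2 :: l :: u)).
  exact: (req_ctx [::] u (comm_letters (H _ (mem_head _ _)))).
have IH' : raag_eq e (l :: u) (u ++ [:: l]).
  by apply: IH => l3 l3u; apply: H; rewrite in_cons l3u orbT.
by have := req_ctx [:: l2] [::] IH'; rewrite /= !cats0.
Qed.

Lemma comm_words (u1 u2 : seq (letter n)) :
  (forall l1 l2, l1 \in u1 -> l2 \in u2 -> l1.1 = l2.1 \/ e l1.1 l2.1) ->
  raag_eq e (u1 ++ u2) (u2 ++ u1).
Proof.
elim: u1 => [|l u1 IH] H /=; first by rewrite cats0; exact: raag_refl.
apply: (@req_tr _ (l :: u2 ++ u1)).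
  have IH' : raag_eq e (u1 ++ u2) (u2 ++ u1).
    by apply: IH => l1 l2 h1 h2; apply: H => //; rewrite in_cons h1 orbT.
  by have := req_ctx [:: l] [::] IH'; rewrite /= !cats0.
have := req_ctx [::] u1 (comm_letter_word (l:=l) (u:=u2) _).
rewrite /= -catA /=; apply => l2 h2; apply: H => //; exact: mem_head.
Qed.

End Words.

Section Forward.
Variable n : nat.
Variable e : rel 'I_n.
Hypothesis esym : symmetric e.
Hypothesis eirr : irreflexive e.

Lemma diag_mulE (E M : 'M[int]_n) i j : is_diag_mx E ->
  (E *m M) i j = E i i * M i j /\ (M *m E) i j = M i j * E j j.
Proof.
move=> /is_diag_mxP dE; split.
- rewrite mxE (bigD1 i) //= big1 ?addr0 // => k nk.
  by rewrite dE ?mul0r // eq_sym.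
- rewrite mxE (bigD1 j) //= big1 ?addr0 // => k nk.
  by rewrite dE ?mulr0.
Qed.

Definition tv (v w : 'I_n) (b : bool) : 'I_n -> seq (letter n) :=
  fun x => if x == v then [:: (v,false); (w,b)] else [:: (x,false)].

Lemma tv_endo v w b : dominated e v w -> raag_endo e (tv v w b).
Proof.
move=> /forallP Hd x y exy; apply: comm_words => // l1 l2.
rewrite /tv; case: (eqVneq x v) => [xv|xv]; case: (eqVneq y v) => [yv|yv].
- by subst; rewrite eirr in exy.
- subst; rewrite !inE => /orP[/eqP->|/eqP->] /eqP-> /=; first by right.
  have := Hd y; rewrite exy /= => /orP[/eqP->|]; by [left|right].
- subst; rewrite !inE => /eqP-> /orP[/eqP->|/eqP->] /=; first by right.
  have := Hd x; rewrite esym exy /= => /orP[/eqP->|]; first by left.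
  by rewrite esym; right.
- by rewrite !inE => /eqP-> /eqP->; right.
Qed.

Lemma tv_aut v w : v != w -> dominated e v w -> raag_aut e (tv v w false).
Proof.
move=> nvw Hd; split; first exact: tv_endo.
exists (tv v w true); split; first exact: tv_endo.
have twv : tv v w false w = [:: (w,false)] by rewrite /tv eq_sym (negbTE nvw).
have twv' : tv v w true w = [:: (w,false)] by rewrite /tv eq_sym (negbTE nvw).
split=> x; rewrite {2}/tv; case: (eqVneq x v) => [->|xv].
- rewrite /wsubst /= twv /winv /= {1}/tv eqxx /=.
  exact: (req_ctx [:: (v,false)] [::] (raag_cancel e w false)).
- by rewrite /wsubst /= /tv (negbTE xv) /=; apply: raag_refl.
- rewrite /wsubst /= twv' /= {1}/tv eqxx /=.
  exact: (req_ctx [:: (v,false)] [::] (raag_cancel e w true)).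
- by rewrite /wsubst /= /tv (negbTE xv) /=; apply: raag_refl.
Qed.

Definition pv (s : {perm 'I_n}) : 'I_n -> seq (letter n) := fun x => [:: (s x, false)].

Lemma pv_aut s : graph_aut e s -> raag_aut e (pv s).
Proof.
move=> Hs; split.
  by move=> x y exy; apply: raag_comm; rewrite Hs.
exists (pv s^-1); split.
  by move=> x y exy; apply: raag_comm; rewrite -Hs !permKV.
split=> x; rewrite /wsubst /pv /= ?permKV ?permK; exact: raag_refl.
Qed.

Lemma dominated_refl v : dominated e v v.
Proof. by apply/forallP=> z; apply/implyP=> evz; rewrite evz orbT. Qed.

Lemma forward (E : 'M[int]_n) : is_diag_mx E ->
  (forall M, in_Phi e M -> E *m M = M *m E) ->
  (forall v w, same_dom_orbit e v w -> E v v = E w w) /\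
  (forall v w, dominated e v w -> E v v = E w w).
Proof.
move=> dE HM.
have H2 : forall v w, dominated e v w -> E v v = E w w.
  move=> v w Hd; case: (eqVneq v w) => [->//|nvw].
  have := HM _ (ex_intro _ _ (conj (tv_aut nvw Hd) erefl)).
  move/matrixP=> /(_ w v); have [-> ->] := diag_mulE (abmx (tv v w false)) w v dE.
  rewrite !mxE /tv eqxx !expsum_cons expsum_nil /sgnl /= eqxx.
  by rewrite (negbTE nvw) add0r addr0 mulr1 mul1r => ->.
split=> // v w [s [Hs Hsv]].
have := HM _ (ex_intro _ _ (conj (pv_aut Hs) erefl)).
move/matrixP=> /(_ (s v) v); have [-> ->] := diag_mulE (abmx (pv s)) (s v) v dE.
rewrite !mxE /pv expsum_cons expsum_nil /sgnl /= eqxx addr0 mulr1 mul1r => <-.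
have : s v \in dom_class e w by rewrite -Hsv; apply: imset_f; rewrite inE /dom_equiv dominated_refl.
by rewrite inE => /andP[/H2].
Qed.

End Forward.


Section LinAlg.
Variable F : fieldType.
Variable n : nat.
Variable g : rel 'I_n.
Hypothesis gsym : symmetric g.
Hypothesis girr : irreflexive g.

Definition validm (A : 'M[F]_n) := forall v w i j, g v w -> i != j -> ~~ g i j ->
  A i v * A j w = A j v * A i w.

Definition lks (v : 'I_n) : {set 'I_n} := [set z | g v z].
Definition sts (v : 'I_n) : {set 'I_n} := v |: lks v.

Lemma card_sts v : #|sts v| = (#|lks v|).+1.
Proof. by rewrite /sts cardsU1 inE girr. Qed.

Lemma valid_st (A : 'M[F]_n) v w u j : validm A -> w \in sts v -> u != j -> ~~ g u j ->
  A u w * A j v = A j w * A u v.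
Proof.
move=> VA; rewrite /sts !inE => /orP[/eqP->|gvw] nuj nguj; first by rewrite mulrC.
by apply: VA => //; rewrite gsym.
Qed.

Lemma rank_lower (A : 'M[F]_n) v : A \in unitmx ->
  (#|sts v| <= \rank (\matrix_(r < #|sts v|, j < n) A j (enum_val r)))%N.
Proof.
move=> Au; set k := #|sts v|; set Ak := \matrix_(r < k, j < n) A j (enum_val r).
pose Sel : 'M[F]_(n, k) := \matrix_(j, s) ((j == enum_val s)%:R).
apply: (mulmx1_min_rank (r := k) (A := Ak) (M := 1%:M) (N := (invmx A)^T *m Sel)).
apply/matrixP=> r s; rewrite mul1mx !mxE.
rewrite (eq_bigr (fun j => (invmx A) (enum_val s) j * A j (enum_val r))); last first.
  move=> j _; rewrite !mxE (bigD1 (enum_val s)) //= big1 ?addr0.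
    by rewrite !mxE eqxx mulr1 mulrC.
  by move=> l nl; rewrite !mxE (negbTE nl) mulr0.
have := mulVmx Au => /matrixP /(_ (enum_val s) (enum_val r)); rewrite !mxE => ->.
by rewrite (inj_eq enum_val_inj) eq_sym.
Qed.

Lemma sum_enum_lk (p j : 'I_n) (c : 'I_n -> F) :
  \sum_(s < #|lks p|) c (enum_val s) * ((enum_val s == j)%:R) =
  if j \in lks p then c j else 0.
Proof.
rewrite -(big_enum_val (fun i => c i * ((i == j)%:R))) /=.
case: ifP => jin.
  rewrite (bigD1 j) //= eqxx mulr1 big1 ?addr0 // => i /andP[_ nij].
  by rewrite (negbTE nij) mulr0.
rewrite big1 // => i iin; case: eqP => [eij|]; last by rewrite mulr0.
by subst; rewrite iin in jin.
Qed.

Lemma PV (A : 'M[F]_n) v p : A \in unitmx -> validm A -> A p v != 0 ->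
  (#|lks v| <= #|lks p|)%N /\
  (#|lks v| = #|lks p| -> forall u, A u v != 0 -> dominated g p u).
Proof.
move=> Au VA Apv.
set k := #|sts v|; set Ak := \matrix_(r < k, j < n) A j (enum_val r).
have rk : (k <= \rank Ak)%N by apply: rank_lower.
set k' := #|lks p|.
pose Bm : 'M[F]_(1 + k', n) :=
  col_mx (\row_j A j v) (\matrix_(s < k', j < n) ((enum_val s == j)%:R)).
have rB : (\rank Bm <= 1 + k')%N by apply: rank_leq_row.
have sAB : (Ak <= Bm)%MS.
  apply/row_subP => r; set w := enum_val r.
  have wst : w \in sts v by apply: enum_valP.
  pose lam := A p w / A p v.
  pose D : 'M[F]_(1, 1 + k') := row_mx (lam%:M) (\row_s (A (enum_val s) w - lam * A (enum_val s) v)).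
  have -> : row r Ak = D *m Bm.
    rewrite /D /Bm mul_row_col; apply/rowP => j; rewrite !mxE.
    rewrite (bigD1 ord0) //= big1 ?addr0; last by move=> i; rewrite [i]ord1 eqxx.
    rewrite !mxE eqxx mulr1n.
    under eq_bigr do rewrite !mxE.
    rewrite (sum_enum_lk p j (fun i => A i w - lam * A i v)).
    case: ifP => jin; first by ring.
    rewrite addr0 /lam; case: (eqVneq j p) => [->|njp].
      by rewrite mulrAC -mulrA divff // mulr1.
    have ngjp : ~~ g j p by rewrite gsym; move: jin; rewrite inE => ->.
    have := valid_st VA wst njp ngjp => H.
    by rewrite mulrAC -H mulfK.
  exact: submxMl.
split.
  have := leq_trans rk (leq_trans (mxrankS sAB) rB).
  by rewrite /k card_sts add1n ltnS.
move=> eqd u Auv; apply/forallP => j; apply/implyP => gpj.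
apply/negPn/negP; rewrite negb_or => /andP[nju ngju].
have jin : j \in lks p by rewrite inE.
have sBA : (Bm <= Ak)%MS.
  have := mxrank_leqif_sup sAB => [[_ <-]].
  rewrite eqn_leq mxrankS //=; apply: leq_trans rB _.
  by apply: leq_trans rk; rewrite /k card_sts eqd add1n.
have : (row (rshift 1 (enum_rank_in jin j)) Bm <= Ak)%MS.
  exact: submx_trans (row_sub _ _) sBA.
case/submxP => D HD.
have Hc : forall l, (j == l)%:R = \sum_r D 0 r * A l (enum_val r).
  move=> l; move/rowP: HD => /(_ l); rewrite mxE.
  rewrite (@col_mxEd _ 1 k') mxE enum_rankK_in // => ->; rewrite mxE.
  by apply: eq_bigr => r _; rewrite !mxE.
have : \sum_r D 0 r * (A u (enum_val r) * A j v - A j (enum_val r) * A u v) = 0.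
  rewrite big1 // => r _.
  by rewrite (valid_st VA (enum_valP r)) ?subrr ?mulr0 // eq_sym.
under eq_bigr do rewrite mulrBr !mulrA.
rewrite sumrB -!mulr_suml -Hc -Hc eqxx (negbTE nju) mul0r mul1r sub0r.
by move/eqP; rewrite oppr_eq0 (negbTE Auv).
Qed.

End LinAlg.


Section Graph.
Variable n : nat.
Variable g : rel 'I_n.
Hypothesis gsym : symmetric g.
Hypothesis girr : irreflexive g.

Lemma domiP a b : reflect (forall z, g a z -> z = b \/ g b z) (dominated g a b).
Proof.
apply: (iffP forallP) => H z.
  by move=> gaz; have := H z; rewrite gaz /= => /orP[/eqP->|]; [left|right].
by apply/implyP => /H [->|->]; rewrite ?eqxx ?orbT.
Qed.

Lemma dom_refl a : dominated g a a.
Proof. by apply/domiP => z gaz; right; rewrite gaz. Qed.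

Lemma dom_trans a b c : dominated g a b -> dominated g b c -> dominated g a c.
Proof.
move=> /domiP Hab /domiP Hbc; apply/domiP => z gaz.
case: (Hab z gaz) => [zb|gbz]; last exact: Hbc.
subst z; case: (eqVneq b c) => [->|nbc]; first by left.
right; case: (Hbc a); first by rewrite gsym.
  by move=> ac; subst c.
move=> gca; case: (Hab c); first by rewrite gsym.
  by move=> cb; rewrite cb eqxx in nbc.
by rewrite gsym.
Qed.

Lemma lksD_sub a b : dominated g a b -> lks g a :\ b \subset lks g b :\ a.
Proof.
move=> /domiP H; apply/subsetP => z; rewrite !inE => /andP[nzb gaz].
case: (H z gaz) => [/eqP zb|->]; first by rewrite zb in nzb.
rewrite andbT; apply/eqP => za; subst z; by rewrite girr in gaz.
Qed.

Lemma card_lksD a b : #|lks g a| = (#|lks g a :\ b| + (g a b))%N.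
Proof.
case: (boolP (b \in lks g a)) => bin.
  by rewrite (cardsD1 b (lks g a)) bin addnC; move: bin; rewrite inE => ->.
rewrite setDE; have -> : lks g a :&: ~: [set b] = lks g a.
  apply/setP => z; rewrite !inE; case: (eqVneq z b) => [->|]; last by rewrite andbT.
  by move: bin; rewrite inE => /negbTE->.
by move: bin; rewrite inE => /negbTE->; rewrite addn0.
Qed.

Lemma domeq_deg a b : dom_equiv g a b -> #|lks g a| = #|lks g b|.
Proof.
move=> /andP[dab dba].
have E : lks g a :\ b = lks g b :\ a.
  by apply/eqP; rewrite eqEsubset !lksD_sub.
by rewrite (card_lksD a b) (card_lksD b a) E gsym.
Qed.

Lemma dom_deg_eq a b : dominated g a b -> #|lks g a| = #|lks g b| -> dominated g b a.
Proof.
move=> dab hd.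
have E : lks g a :\ b = lks g b :\ a.
  apply/eqP; rewrite eqEcard lksD_sub //=.
  by move: hd; rewrite (card_lksD a b) (card_lksD b a) gsym => /addIn ->.
apply/domiP => z gbz; case: (eqVneq z a) => [->|nza]; first by left.
have : z \in lks g b :\ a by rewrite !inE nza gbz.
by rewrite -E !inE => /andP[_ ->]; right.
Qed.

Lemma domeq_sym a b : dom_equiv g a b = dom_equiv g b a.
Proof. by rewrite /dom_equiv andbC. Qed.

Lemma domeq_trans a b c : dom_equiv g a b -> dom_equiv g b c -> dom_equiv g a c.
Proof.
move=> /andP[h1 h2] /andP[h3 h4]; apply/andP; split; apply: dom_trans; eassumption.
Qed.

Lemma class_clique a b c : dom_equiv g a b -> g a b -> dom_equiv g a c -> c != a -> g a c.
Proof.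
move=> eab gab eac nca.
case: (eqVneq c b) => [->//|ncb].
have ecb : dom_equiv g c b by apply: domeq_trans eab; rewrite domeq_sym.
move: eac => /andP[/domiP dac _].
case: (dac b gab) => [bc|gcb]; first by rewrite bc eqxx in ncb.
move: ecb => /andP[_ /domiP dbc].
case: (dbc a); first by rewrite gsym.
  by move=> ac; rewrite ac eqxx in nca.
by rewrite gsym.
Qed.

Lemma class_indep a b c : dom_equiv g a b -> a != b -> ~~ g a b -> dom_equiv g a c -> ~~ g a c.
Proof.
move=> eab nab ngab eac; apply/negP => gac.
have eca : dom_equiv g a c := eac.
have := class_clique eac gac eab; rewrite eq_sym nab => /(_ isT).
by rewrite (negbTE ngab).
Qed.

End Graph.

Section Compl.
Variable n : nat.
Variable g : rel 'I_n.
Hypothesis gsym : symmetric g.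
Hypothesis girr : irreflexive g.

Definition gc : rel 'I_n := fun x y => (x != y) && ~~ g x y.

Lemma gc_sym : symmetric gc.
Proof. by move=> x y; rewrite /gc eq_sym gsym. Qed.

Lemma gc_irr : irreflexive gc.
Proof. by move=> x; rewrite /gc eqxx. Qed.

Lemma dom_gc a b : dominated gc a b = dominated g b a.
Proof.
apply/domiP/domiP => H z.
- move=> gbz; case: (eqVneq z a) => [->|nza]; first by left.
  right; apply/negPn/negP => ngaz.
  case: (H z); first by rewrite /gc eq_sym nza ngaz.
    by move=> zb; subst z; rewrite girr in gbz.
  by rewrite /gc gbz andbF.
- move=> /andP[naz ngaz]; case: (eqVneq z b) => [->|nzb]; first by left.
  right; rewrite /gc eq_sym nzb /=; apply/negP => gbz.
  case: (H z gbz) => [za|]; first by rewrite za eqxx in naz.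
  by rewrite (negbTE ngaz).
Qed.

Lemma domeq_gc a b : dom_equiv gc a b = dom_equiv g a b.
Proof. by rewrite /dom_equiv !dom_gc andbC. Qed.

Lemma valid_tr (F : fieldType) (A : 'M[F]_n) : validm g A -> validm gc A^T.
Proof.
move=> VA v w i j /andP[nvw ngvw] nij; rewrite /gc nij /= negbK => gij.
by rewrite !mxE VA // mulrC.
Qed.

End Compl.


Section Match.
Variable F : fieldType.
Variable n : nat.

Lemma exists_matching (A : 'M[F]_n) : A \in unitmx ->
  exists s : {perm 'I_n}, forall v, A (s v) v != 0.
Proof.
move=> Au.
case: (pickP (fun s : 'S_n => \prod_i A i (s i) != 0)) => [s Hs|H0].
  exists (s^-1)%g => v; move/prodf_neq0: Hs => /(_ ((s^-1)%g v) isT).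
  by rewrite permKV.
move: Au; rewrite unitmxE unitfE /determinant big1 ?eqxx // => s _.
by have := H0 s; rewrite /= => /negbFE/eqP->; rewrite mulr0.
Qed.

Lemma sum_perm_eq (s : {perm 'I_n}) (d : 'I_n -> nat) :
  (forall v, d v <= d (s v))%N -> forall v, d v = d (s v).
Proof.
move=> H v; apply/eqP; rewrite eqn_leq H /= leqNgt; apply/negP => lt.
have E : (\sum_i d i = \sum_i d (s i))%N := reindex_inj (@perm_inj _ s).
have : (\sum_i d i < \sum_i d (s i))%N.
  rewrite (bigD1 v) //= [X in (_ < X)%N](bigD1 v) //=.
  rewrite -addSn; apply: leq_add => //; apply: leq_sum => i _; exact: H.
by rewrite E ltnn.
Qed.

End Match.

Section CA.
Variable F : fieldType.
Variable n : nat.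
Variable g : rel 'I_n.
Hypothesis gsym : symmetric g.
Hypothesis girr : irreflexive g.
Variable A : 'M[F]_n.
Hypothesis Au : A \in unitmx.
Hypothesis VA : validm g A.
Variable s : {perm 'I_n}.
Hypothesis Hs : forall v, A (s v) v != 0.

Lemma CA_deg v : #|lks g v| = #|lks g (s v)|.
Proof.
apply: (sum_perm_eq (d := fun v => #|lks g v|)) => w.
by have [] := PV gsym girr Au VA (Hs w).
Qed.

Lemma CA_dom v u : A u v != 0 -> dominated g (s v) u.
Proof.
by have [_ H] := PV gsym girr Au VA (Hs v); apply: H; apply: CA_deg.
Qed.

End CA.


Section Lam.
Variable F : numFieldType.

Lemma lin_uniq (p q x y : F) : (p != 0) || (q != 0) -> p + x * q = 0 -> p + y * q = 0 -> x = y.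
Proof.
move=> pq h1 h2.
have E : (x - y) * q = (p + x * q) - (p + y * q) by ring.
move: E; rewrite h1 h2 subrr => /eqP; rewrite mulf_eq0 => /orP[|/eqP q0]; first by rewrite subr_eq0 => /eqP.
by move: h1 pq; rewrite q0 mulr0 addr0 => ->; rewrite eqxx.
Qed.

Lemma choose_lam (a b c d : F) : a != 0 -> d != 0 ->
  exists lam : F, (a + lam * b != 0) && (c + lam * d != 0).
Proof.
move=> a0 d0.
have ab : forall x y, a + x * b = 0 -> a + y * b = 0 -> x = y.
  by move=> x y; apply: lin_uniq; rewrite a0.
have cd : forall x y, c + x * d = 0 -> c + y * d = 0 -> x = y.
  by move=> x y; apply: lin_uniq; rewrite d0 orbT.
have d12 : (1%:R : F) != 2%:R by rewrite eqr_nat.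
have d13 : (1%:R : F) != 3%:R by rewrite eqr_nat.
have d23 : (2%:R : F) != 3%:R by rewrite eqr_nat.
case: (boolP ((a + 1%:R * b != 0) && (c + 1%:R * d != 0))) => [h|]; first by exists 1%:R.
case: (boolP ((a + 2%:R * b != 0) && (c + 2%:R * d != 0))) => [h|]; first by exists 2%:R.
case: (boolP ((a + 3%:R * b != 0) && (c + 3%:R * d != 0))) => [h|]; first by exists 3%:R.
rewrite !negb_and !negbK.
move=> /orP[/eqP h3|/eqP h3] /orP[/eqP h2|/eqP h2] /orP[/eqP h1|/eqP h1].
- by move: d12; rewrite (ab _ _ h1 h2) eqxx.
- by move: d23; rewrite (ab _ _ h2 h3) eqxx.
- by move: d13; rewrite (ab _ _ h1 h3) eqxx.
- by move: d12; rewrite (cd _ _ h1 h2) eqxx.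
- by move: d12; rewrite (ab _ _ h1 h2) eqxx.
- by move: d13; rewrite (cd _ _ h1 h3) eqxx.
- by move: d23; rewrite (cd _ _ h2 h3) eqxx.
- by move: d12; rewrite (cd _ _ h1 h2) eqxx.
Qed.

End Lam.

Section Trans.
Variable F : fieldType.
Variable n : nat.
Variable g : rel 'I_n.
Hypothesis gsym : symmetric g.
Hypothesis girr : irreflexive g.
Variable A : 'M[F]_n.
Hypothesis Au : A \in unitmx.
Hypothesis VA : validm g A.
Variable s : {perm 'I_n}.
Hypothesis Hs : forall v, A (s v) v != 0.

Lemma CA_dom_tr v u : A u v != 0 -> dominated g v ((s^-1)%g u).
Proof.
move=> Auv.
have Hs' : forall x, A^T ((s^-1)%g x) x != 0.
  by move=> x; rewrite mxE; have := Hs ((s^-1)%g x); rewrite permKV.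
have := CA_dom (gc_sym gsym) (@gc_irr _ g) (A := A^T) _ (valid_tr VA) Hs' (u := v) (v := u).
rewrite dom_gc // mxE; apply => //; by rewrite unitmx_tr.
Qed.

Lemma P3 v w : g v w -> ~~ g (s v) (s w) -> dom_equiv g v w.
Proof.
move=> gvw ng.
have nvw : v != w by apply/eqP => vw; subst w; rewrite girr in gvw.
have nsvw : s v != s w by rewrite (inj_eq perm_inj).
have E := VA gvw nsvw ng.
have := mulf_neq0 (Hs v) (Hs w); rewrite E mulf_eq0 negb_or => /andP[h1 h2].
have := CA_dom_tr h1; have := CA_dom_tr h2; rewrite !permK => d1 d2.
by rewrite /dom_equiv d1 d2.
Qed.

End Trans.


Section Class.
Variable F : numFieldType.
Variable n : nat.
Variable g : rel 'I_n.
Hypothesis gsym : symmetric g.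
Hypothesis girr : irreflexive g.
Variable A : 'M[F]_n.
Hypothesis Au : A \in unitmx.
Hypothesis VA : validm g A.
Variable s : {perm 'I_n}.
Hypothesis Hs : forall v, A (s v) v != 0.

Lemma tvmx_unit (v w : 'I_n) (lam : F) : v != w ->
  (1%:M + lam *: delta_mx w v : 'M[F]_n) \in unitmx.
Proof.
move=> nvw.
have : (1%:M + lam *: delta_mx w v) *m (1%:M - lam *: delta_mx w v) = 1%:M :> 'M[F]_n.
  rewrite mulmxDl mulmxBr mulmxBr !mul1mx !mulmx1 -!scalemxAl -!scalemxAr.
  rewrite mul_delta_mx_cond (negbTE nvw) mulr0n !scaler0 subr0.
  by rewrite subrK.
by case/mulmx1_unit.
Qed.

Lemma tvmxE (v w : 'I_n) (lam : F) i j :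
  (A *m (1%:M + lam *: delta_mx w v)) i j = A i j + (j == v)%:R * (lam * A i w).
Proof.
rewrite mulmxDr mulmx1 -scalemxAr !mxE; congr (_ + _).
rewrite (bigD1 w) //= big1 ?addr0.
  by rewrite !mxE eqxx /=; case: (j == v); rewrite /= ?mulr1 ?mulr0 ?mul1r ?mul0r; ring.
by move=> k nk; rewrite !mxE (negbTE nk) /= mulr0.
Qed.

Lemma tvmx_valid (v w : 'I_n) (lam : F) : v != w -> dominated g v w ->
  validm g (A *m (1%:M + lam *: delta_mx w v)).
Proof.
move=> nvw /domiP Hd x y i j gxy nij ngij; rewrite !tvmxE.
case: (eqVneq x v) => [xv|xv]; case: (eqVneq y v) => [yv|yv].
- by subst; rewrite girr in gxy.
- subst x; rewrite /= !mul1r !mul0r !addr0.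
  have h1 := VA gxy nij ngij.
  have h2 : A i w * A j y = A j w * A i y.
    case: (Hd y gxy) => [->|gwy]; first by rewrite mulrC.
    exact: VA gwy nij ngij.
  by rewrite mulrDl mulrDl -mulrA h2 h1 mulrA.
- subst y; rewrite /= !mul1r !mul0r !addr0.
  have h1 := VA gxy nij ngij.
  have h2 : A i x * A j w = A j x * A i w.
    have gvx : g v x by rewrite gsym.
    case: (Hd x gvx) => [->|gwx]; first by rewrite mulrC.
    by apply: VA nij ngij; rewrite gsym.
  rewrite !mulrDr h1; congr (_ + _).
  by rewrite mulrCA h2 mulrCA.
- by rewrite /= !mul0r !addr0; apply: VA.
Qed.

Lemma class_pres v w : dom_equiv g v w -> dom_equiv g (s v) (s w).
Proof.
case: (eqVneq v w) => [->|nvw]; first by rewrite /dom_equiv !dom_refl.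
move=> evw; have /andP[dvw dwv] := evw.
have [lam /andP[l1 l2]] := choose_lam (A (s v) w) (A (s w) v) (Hs v) (Hs w).
set A2 := A *m (1%:M + lam *: delta_mx w v).
have A2u : A2 \in unitmx by rewrite unitmx_mul Au tvmx_unit.
have V2 : validm g A2 by apply: tvmx_valid.
have [s2 Hs2] := exists_matching A2u.
have E2 : forall u, A2 u v = A u v + lam * A u w.
  by move=> u; rewrite /A2 tvmxE eqxx mul1r.
have d1 : dominated g (s2 v) (s v).
  by apply: (CA_dom gsym girr A2u V2 Hs2); rewrite E2.
have d2 : dominated g (s2 v) (s w).
  by apply: (CA_dom gsym girr A2u V2 Hs2); rewrite E2.
have deq : #|lks g (s v)| = #|lks g (s w)|.
  by rewrite -!(CA_deg gsym girr Au VA Hs) (domeq_deg gsym girr evw).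
have [d3|d3] : dominated g (s v) (s w) \/ dominated g (s w) (s v).
  have := Hs2 v; rewrite E2.
  case: (eqVneq (A (s2 v) v) 0) => [a0|a0].
    rewrite a0 add0r mulf_eq0 negb_or => /andP[_ aw].
    by right; exact: (dom_trans gsym (CA_dom gsym girr Au VA Hs aw) d1).
  by move=> _; left; exact: (dom_trans gsym (CA_dom gsym girr Au VA Hs a0) d2).
- by rewrite /dom_equiv d3 (dom_deg_eq gsym girr d3).
- by rewrite /dom_equiv d3 (dom_deg_eq gsym girr d3).
Qed.

End Class.


Section Aut.
Variable F : numFieldType.
Variable n : nat.
Variable g : rel 'I_n.
Hypothesis gsym : symmetric g.
Hypothesis girr : irreflexive g.
Variable A : 'M[F]_n.
Hypothesis Au : A \in unitmx.
Hypothesis VA : validm g A.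
Variable s : {perm 'I_n}.
Hypothesis Hs : forall v, A (s v) v != 0.

Lemma C1 v w : dom_equiv g v w -> dom_equiv g (s v) (s w).
Proof. exact: (class_pres gsym girr Au VA Hs). Qed.

Lemma C2 v w : dom_equiv g (s v) (s w) -> dom_equiv g v w.
Proof.
have Hs' : forall x, A^T ((s^-1)%g x) x != 0.
  by move=> x; rewrite mxE; have := Hs ((s^-1)%g x); rewrite permKV.
have := class_pres (gc_sym gsym) (@gc_irr _ g) (A := A^T) _ (valid_tr VA) Hs' (v := s v) (w := s w).
rewrite !domeq_gc // !permK; apply; by rewrite unitmx_tr.
Qed.

Lemma cross a b : ~~ dom_equiv g a b -> g (s a) (s b) = g a b.
Proof.
move=> nab.
have P3c : forall x y, g x y -> ~~ dom_equiv g x y -> g (s x) (s y).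
  move=> x y gxy nxy; apply/negPn/negP => ng.
  by have := P3 gsym girr Au VA Hs gxy ng; rewrite (negbTE nxy).
apply/idP/idP; last by move=> gab; apply: P3c.
move=> gsab.
pose X := [set ab : 'I_n * 'I_n | g ab.1 ab.2 && ~~ dom_equiv g ab.1 ab.2].
pose f := fun ab : 'I_n * 'I_n => (s ab.1, s ab.2).
have finj : injective f.
  by move=> [x1 y1] [x2 y2] [/perm_inj -> /perm_inj ->].
have sub : f @: X \subset X.
  apply/subsetP => z /imsetP [[x y]]; rewrite inE /= => /andP[gxy nxy] ->.
  rewrite inE /= P3c //=; apply/negP => /C2; by rewrite (negbTE nxy).
have EX : f @: X = X by apply/eqP; rewrite eqEcard sub (card_imset _ finj) leqnn.
have : f (a, b) \in X.
  rewrite inE /= gsab /=; apply/negP => /C2; by rewrite (negbTE nab).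
by rewrite -EX (mem_imset _ _ finj) inE => /andP[].
Qed.

Definition In_ x := lks g x :&: dom_class g x.
Definition Out_ x := lks g x :\: dom_class g x.

Lemma Out_s a : s @: Out_ a = Out_ (s a).
Proof.
apply/setP => y; rewrite -(permKV s y) (mem_imset _ _ (@perm_inj _ s)).
set z := (s^-1)%g y; rewrite !inE.
case: (boolP (dom_equiv g z a)) => [eza|nza].
  by rewrite (C1 eza).
have nsza : ~~ dom_equiv g (s z) (s a) by apply/negP => /C2; rewrite (negbTE nza).
rewrite nsza /= cross //; by rewrite domeq_sym.
Qed.

Lemma In0 x y : dom_equiv g x y -> x != y -> (#|In_ x| == 0%N) = ~~ g x y.
Proof.
move=> exy nxy; apply/idP/idP.
  rewrite cards_eq0 => /eqP I0; apply/negP => gxy.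
  have : y \in In_ x by rewrite !inE gxy domeq_sym.
  by rewrite I0 inE.
move=> ngxy; rewrite cards_eq0; apply/eqP/setP => z; rewrite !inE.
apply/negbTE; rewrite negb_and; case: (boolP (dom_equiv g z x)) => [ezx|_]; rewrite /= ?orbT ?orbF //.
apply: (class_indep gsym exy nxy ngxy); by rewrite domeq_sym.
Qed.

Lemma s_graph_aut : graph_aut g s.
Proof.
move=> a b.
case: (eqVneq a b) => [->|nab]; first by rewrite !girr.
case: (boolP (dom_equiv g a b)) => [eab|neab]; last exact: cross.
have nsab : s a != s b by rewrite (inj_eq perm_inj).
have hI : #|In_ a| = #|In_ (s a)|.
  have h1 := cardsID (dom_class g a) (lks g a).
  have h2 := cardsID (dom_class g (s a)) (lks g (s a)).
  have h3 : #|Out_ a| = #|Out_ (s a)| by rewrite -Out_s card_imset //; apply: perm_inj.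
  have h4 := CA_deg gsym girr Au VA Hs a.
  by move: h1 h2; rewrite /In_ /Out_ in h3 * => h1 h2; apply/eqP;
    rewrite -(eqn_add2r #|lks g (s a) :\: dom_class g (s a)|) h2 -h3 h1 h4.
apply/negb_inj; rewrite -(In0 eab nab) -(In0 (C1 eab) nsab) hI //.
Qed.

End Aut.


Lemma aut_dom n (e : rel 'I_n) (s : {perm 'I_n}) : graph_aut e s ->
  forall x y, dominated e (s x) (s y) = dominated e x y.
Proof.
move=> Hs x y; apply/domiP/domiP => H z.
- move=> exz; case: (H (s z)); first by rewrite Hs.
    by move/perm_inj ->; left.
  by rewrite Hs; right.
- move=> esxz; rewrite -(permKV s z) in esxz *; rewrite Hs in esxz.
  case: (H _ esxz) => [->|]; first by left.
  by right; rewrite Hs.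
Qed.

Lemma aut_class n (e : rel 'I_n) (s : {perm 'I_n}) : graph_aut e s ->
  forall v, s @: dom_class e v = dom_class e (s v).
Proof.
move=> Hs v; apply/setP => u; rewrite -(permKV s u) (mem_imset _ _ (@perm_inj _ s)).
by rewrite !inE /dom_equiv !(aut_dom Hs).
Qed.

Unset Implicit Arguments.
Theorem mainTheorem6 (n : nat) (e : rel 'I_n) (E : 'M[int]_n) :
  simplicial_graph e ->
  is_diag_mx E ->
  (forall v, E v v = 1 \/ E v v = -1) ->
  ((forall M, in_Phi e M -> E *m M = M *m E) <->
   ((forall v w, same_dom_orbit e v w -> E v v = E w w) /\
    (forall v w, dominated e v w -> E v v = E w w))).
Proof.
move=> [esym eirr] dE _; split; first exact: forward.
move=> [H1 H2] M [phi [[Hendo [psi [_ [Hpq _]]]] ->]].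
set Mz := abmx phi.
pose f := ( *~%R (1 : rat)).
set Mq := map_mx f Mz.
have Mqu : Mq \in unitmx.
  have := abmx_mul Hpq => /(congr1 (map_mx f)); rewrite map_mxM map_mx1.
  by case/mulmx1_unit.
have Vq : validm e Mq.
  move=> v w i j evw nij neij; have h := abmx_valid esym Hendo evw nij neij.
  by rewrite !mxE -!rmorphM; rewrite !mxE in h; rewrite h.
have [s Hs] := exists_matching Mqu.
have sA := s_graph_aut esym eirr Mqu Vq Hs.
apply/matrixP => u v; have [-> ->] := diag_mulE Mz u v dE.
case: (eqVneq (Mz u v) 0) => [->|nz]; first by rewrite mulr0 mul0r.
have nzq : Mq u v != 0 by rewrite mxE intr_eq0.
have d := CA_dom esym eirr Mqu Vq Hs nzq.
have E1 := H2 _ _ d.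
have E2 : E v v = E (s v) (s v).
  by apply: H1; exists s; split => //; apply: aut_class.
by rewrite mulrC E2 E1.
Qed.
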